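(* Let $\Gamma$ and the data $s_0,\eta_0,\Xi$ be as in the context. There is a constant $c>0$ depending only on this data such that for every cusp $\gamma\xi\infty\in\mathbb R^{n-1}$ ($\gamma\in\Gamma$, $\xi\in\Xi$, $\gamma\xi\notin P$), $h(\gamma\xi\infty)\ge c$.
   Context: $n\ge2$, $G=\mathrm{SO}(n,1)$, $K\cong\mathrm{SO}(n)$ maximal compact. $A=\{a(t)\}$ a one-parameter $\mathbb R$-split torus with $\mathfrak g=\mathfrak g_{-1}\oplus\mathfrak z(A)\oplus\mathfrak g_{+1}$, $\mathrm{Ad}(a(t))=e^{\pm t}$ on $\mathfrak g_{\pm1}$; $M=Z_G(A)\cap K$, $N=\exp\mathfrak g_{+1}$, $\mathfrak g_{+1}\cong\mathbb R^{n-1}$, $u(\mathbf x)=\exp\mathbf x$; $\sigma\in K$ with $\sigma^2=e$, $\sigma a(t)\sigma^{-1}=a(-t)$; $P=MAN$. Each $g\in G\setminus P$ is $g=u(\mathbf x)\sigma ma(r)u(\mathbf y)$ with $\mathbf x,r$ unique; $\partial\mathbb H^n\cong\mathbb R^{n-1}\cup\{\infty\}$ via $u(\mathbf x)\sigma P\mapsto\mathbf x$, $P\mapsto\infty$. $\Omega(\eta,s)=\eta\{a(t):t\ge s\}K$. $\Gamma$ discrete, finite covolume, $\Gamma\backslash\mathbb H^n$ non-compact, with fixed $s_0>0$, compact $\eta_0\subset N$, finite $\Xi\ni e$ satisfying: (i) $G=\Gamma\Xi\Omega(\eta_0,s_0)$; (ii) $\Gamma\cap\xi N\xi^{-1}$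 cocompact in $\xi N\xi^{-1}$; (iii) for compact $\eta$, $\{\gamma:\gamma\Xi\Omega(\eta,s_0)\cap\Omega(\eta,s_0)\ne\emptyset\}$ finite; (iv) for compact $\eta\supseteq\eta_0$ some $s_1>s_0$ with $\gamma\xi_1\Omega(\eta,s_0)\cap\xi_2\Omega(\eta,s_1)\ne\emptyset\Rightarrow\xi_1=\xi_2,\gamma\in\xi_1NM\xi_1^{-1}$. Height: for $\gamma\xi=u(\mathbf x_1)\sigma ma(r)u(\mathbf y)$, $\gamma\xi\infty=\mathbf x_1$ and $h(\gamma\xi\infty)=e^r$. *)

(* Defs.v *)
From HB Require Import structures.
From mathcomp Require Import all_boot all_order all_algebra.
From mathcomp Require Import all_classical all_reals all_analysis.
Import numFieldNormedType.Exports.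

Set Implicit Arguments. Unset Strict Implicit. Unset Printing Implicit Defensive.
Import Order.TTheory GRing.Theory Num.Theory.
Local Open Scope ring_scope.
Local Open Scope classical_set_scope.

(* Model of G = SO_0(n,1) acting on R^{n+1} with coordinates indexed by 'I_(n.+1):
   e_0, ..., e_{n-2} span the boundary chart R^{n-1};
   e_z (index n-1) and e_w (index n, the time coordinate). *)

Section Lorentz.
Variables (R : realType) (n : nat).

Definition zi : 'I_(n.+1) := inord n.-1.
Definition wi : 'I_(n.+1) := ord_max.

Definition Jmx : 'M[R]_(n.+1) :=
  \matrix_(i, j) (if i == j then (if i == wi then -1 else 1) else 0).

Definition inG (g : 'M[R]_(n.+1)) : Prop :=
  g^T *m Jmx *m g = Jmx /\ \det g = 1 /\ 0 < g wi wi.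

Definition inK (g : 'M[R]_(n.+1)) : Prop :=
  inG g /\ g *m delta_mx wi (0 : 'I_1) = delta_mx wi (0 : 'I_1).

Definition coshR (t : R) : R := (expR t + expR (- t)) / 2.
Definition sinhR (t : R) : R := (expR t - expR (- t)) / 2.

(* the R-split torus A = {a(t)}: boost in the (e_z, e_w)-plane;
   Ad(a(t)) = e^{+t} on Lie(N) below *)
Definition amx (t : R) : 'M[R]_(n.+1) :=
  \matrix_(i, j)
    (if (i == zi) && (j == zi) then coshR t
     else if (i == zi) && (j == wi) then sinhR t
     else if (i == wi) && (j == zi) then sinhR t
     else if (i == wi) && (j == wi) then coshR t
     else if i == j then 1 else 0).

(* embedding of x in R^{n-1} as a spacelike vector in span(e_0..e_{n-2}) *)
Definition xemb (x : 'rV[R]_(n.-1)) (i : 'I_(n.+1)) : R :=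
  oapp (fun j : 'I_(n.-1) => x 0 j) 0 (insub (val i)).

(* X_x v = B(v, f+) x~ - B(v, x~) f+,  with f+ = e_z + e_w;  X_x is in so(n,1),
   X_x^3 = 0 and a(t) X_x a(t)^{-1} = e^t X_x *)
Definition Xmx (x : 'rV[R]_(n.-1)) : 'M[R]_(n.+1) :=
  \matrix_(i, j)
    ((if j == zi then 1 else if j == wi then -1 else 0) * xemb x i
     - xemb x j * (if (i == zi) || (i == wi) then 1 else 0)).

(* u(x) = exp(X_x) *)
Definition umx (x : 'rV[R]_(n.-1)) : 'M[R]_(n.+1) :=
  1%:M + Xmx x + (2%:R)^-1 *: (Xmx x *m Xmx x).

Definition inN (g : 'M[R]_(n.+1)) : Prop := exists x, g = umx x.

(* sigma in K, sigma^2 = e, sigma a(t) sigma^{-1} = a(-t):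
   reflection of the coordinates e_0 and e_z (n >= 2 ensures 0 <> z) *)
Definition sigmx : 'M[R]_(n.+1) :=
  \matrix_(i, j)
    (if i == j then (if (val i == 0%N) || (i == zi) then -1 else 1) else 0).

Definition inM (g : 'M[R]_(n.+1)) : Prop :=
  inK g /\ forall t, g *m amx t = amx t *m g.

Definition inP (g : 'M[R]_(n.+1)) : Prop :=
  exists m t x, inM m /\ g = m *m amx t *m umx x.

Definition Omega (eta : set 'rV[R]_(n.-1)) (s : R) : set 'M[R]_(n.+1) :=
  [set g | exists x t k, eta x /\ s <= t /\ inK k /\ g = umx x *m amx t *m k].

Definition ltrans (g : 'M[R]_(n.+1)) (S : set 'M[R]_(n.+1)) : set 'M[R]_(n.+1) :=
  [set g *m h | h in S].

Definition subgroupG (Gam : set 'M[R]_(n.+1)) : Prop :=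
  (forall g, Gam g -> inG g) /\ Gam 1%:M /\
  (forall g h, Gam g -> Gam h -> Gam (g *m h)) /\
  (forall g, Gam g -> Gam (invmx g)).

Definition discrete_subgroup (Gam : set 'M[R]_(n.+1)) : Prop :=
  exists eps : R, 0 < eps /\
    forall g, Gam g -> (forall i j, `|g i j - (1%:M : 'M[R]_(n.+1)) i j| < eps) ->
      g = 1%:M.

Definition cusp_data (Gam : set 'M[R]_(n.+1)) (s0 : R)
    (eta0 : set 'rV[R]_(n.-1)) (Xi : seq 'M[R]_(n.+1)) : Prop :=
  0 < s0 /\ compact eta0 /\ 1%:M \in Xi /\ (forall xi, xi \in Xi -> inG xi) /\
   (forall g, inG g -> exists gam xi om,
        Gam gam /\ xi \in Xi /\ Omega eta0 s0 om /\ g = gam *m xi *m om) /\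
   (* (ii) Gamma cap xi N xi^-1 is cocompact in xi N xi^-1 *)
   (forall xi, xi \in Xi -> exists C : set 'rV[R]_(n.-1), compact C /\
        forall x, exists gam y, Gam gam /\ C y /\
          xi *m umx x *m invmx xi = gam *m (xi *m umx y *m invmx xi)) /\
   (forall eta : set 'rV[R]_(n.-1), compact eta ->
      finite_set [set gam | Gam gam /\ exists xi, xi \in Xi /\
         (ltrans (gam *m xi) (Omega eta s0) `&` Omega eta s0) !=set0]) /\
   (forall eta : set 'rV[R]_(n.-1), compact eta -> eta0 `<=` eta ->
      exists s1, s0 < s1 /\
        forall gam xi1 xi2, Gam gam -> xi1 \in Xi -> xi2 \in Xi ->
          (ltrans (gam *m xi1) (Omega eta s0) `&` ltrans xi2 (Omega eta s1)) !=set0 ->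
          xi1 = xi2 /\ exists x m, inM m /\ gam = xi1 *m umx x *m m *m invmx xi1).

End Lorentz.

(* Main.v *)
Require Import Defs.
From HB Require Import structures.
From mathcomp Require Import all_boot all_order all_algebra.
From mathcomp Require Import all_classical all_reals all_analysis.
From mathcomp Require Import ring lra.
Import numFieldNormedType.Exports.
Import Order.TTheory GRing.Theory Num.Theory.
Local Open Scope ring_scope.
Local Open Scope classical_set_scope.

Section H.
Variables (R : realType) (n : nat).
Hypothesis Hn : (2 <= n)%N.

Lemma val_zi : val (zi n) = n.-1.
Proof. by apply: inordK; rewrite ltnS leq_pred. Qed.
Lemma val_wi : val (wi n) = n.
Proof. by []. Qed.
Lemma zi_neq_wi : (zi n != wi n).
Proof. apply/eqP => /(congr1 val); rewrite val_zi val_wi; case: n Hn => // k _ /= H.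
by move: (n_Sn k).  Qed.
Lemma zi_neq_0 : (zi n != 0).
Proof. apply/eqP => /(congr1 val); rewrite val_zi /=; case: n Hn => // [[]] //. Qed.
Lemma wi_neq_0 : (wi n != 0).
Proof. apply/eqP => /(congr1 val); rewrite val_wi /=; case: n Hn => //. Qed.

Lemma xemb_zi (x : 'rV[R]_(n.-1)) : xemb x (zi n) = 0.
Proof. by rewrite /xemb insubF // val_zi ltnn. Qed.
Lemma xemb_wi (x : 'rV[R]_(n.-1)) : xemb x (wi n) = 0.
Proof. rewrite /xemb insubF // val_wi; case: n Hn => //= k _; by rewrite ltnNge leqnSn. Qed.
Lemma xembD (x y : 'rV[R]_(n.-1)) i : xemb (x + y) i = xemb x i + xemb y i.
Proof. rewrite /xemb; case: insubP => [j _ _|_] /=; by rewrite ?mxE ?addr0. Qed.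
Lemma xemb0 i : xemb (0 : 'rV[R]_(n.-1)) i = 0.
Proof. rewrite /xemb; case: insubP => [j _ _|_] /=; by rewrite ?mxE. Qed.


Definition ez : 'cV[R]_(n.+1) := delta_mx (zi n) 0.
Definition ew : 'cV[R]_(n.+1) := delta_mx (wi n) 0.
Definition fv : 'cV[R]_(n.+1) := ez + ew.
Definition psi : 'rV[R]_(n.+1) := delta_mx 0 (zi n) - delta_mx 0 (wi n).
Definition pv (x : 'rV[R]_(n.-1)) : 'cV[R]_(n.+1) := \col_i xemb x i.
Definition qv (x : 'rV[R]_(n.-1)) : 'rV[R]_(n.+1) := \row_i xemb x i.

Lemma XmxE x : Xmx x = pv x *m psi - fv *m qv x.
Proof.
apply/matrixP => i j; rewrite !mxE !big_ord1 !mxE /=.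
have zw := zi_neq_wi; have wz : wi n != zi n by rewrite eq_sym.
have [->|hjz] := eqVneq j (zi n); have [->|hiz] := eqVneq i (zi n);
 rewrite ?eqxx ?(negbTE zw) ?(negbTE wz) ?xemb_zi ?xemb_wi ?(negbTE hjz) ?(negbTE hiz) /=;
 try ring;
have [->|hjw] := eqVneq j (wi n); have [->|hiw] := eqVneq i (wi n);
 rewrite ?eqxx ?(negbTE zw) ?(negbTE wz) ?xemb_zi ?xemb_wi ?(negbTE hjw) ?(negbTE hiw) /=;
 ring.
Qed.


Lemma zwF : (zi n == wi n) = false. Proof. exact: negbTE zi_neq_wi. Qed.
Lemma wzF : (wi n == zi n) = false. Proof. by rewrite eq_sym zwF. Qed.

Lemma zmodAC (V : zmodType) (o a b u v w : V) :
  o + b + u + (a + (w + w)) + v = o + (a + b) + (v + w + (w + u)).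
Proof.
rewrite -!addrA. congr (o + _). rewrite [RHS](addrCA a b); congr (b + _).
rewrite (addrCA u a); congr (a + _). rewrite [LHS]addrC [RHS]addrC -!addrA.
by rewrite (addrC v).
Qed.

Lemma mulmx0R m k p (A : 'M[R]_(m,k)) : A *m (0 : 'M[R]_(k,p)) = 0.
Proof. exact: mulmx0. Qed.
Lemma mul0mxR m k p (A : 'M[R]_(k,p)) : (0 : 'M[R]_(m,k)) *m A = 0.
Proof. exact: mul0mx. Qed.

Lemma mul1mxR m k (A : 'M[R]_(k,m)) : (1%:M : 'M[R]_k) *m A = A.
Proof. exact: mul1mx. Qed.
Lemma mulmx1R m k (A : 'M[R]_(m,k)) : A *m (1%:M : 'M[R]_k) = A.
Proof. exact: mulmx1. Qed.

Lemma psi_pv x : psi *m pv x = 0.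
Proof.
by rewrite /psi mulmxBl -!rowE; apply/matrixP => i j; rewrite !mxE xemb_zi xemb_wi subrr.
Qed.
Lemma psi_ez : psi *m ez = 1.
Proof.
by rewrite /psi /ez mulmxBl mul_delta_mx (mul_delta_mx_0 _ _ _ (negbT wzF)) subr0; apply/matrixP=> i j; rewrite !ord1 !mxE.
Qed.
Lemma psi_ew : psi *m ew = -1.
Proof.
by rewrite /psi /ew mulmxBl mul_delta_mx (mul_delta_mx_0 _ _ _ (negbT zwF)) sub0r; apply/matrixP=> i j; rewrite !ord1 !mxE.
Qed.
Lemma psi_f : psi *m fv = 0.
Proof. by rewrite /fv mulmxDr psi_ez psi_ew subrr. Qed.
Lemma qv_f x : qv x *m fv = 0.
Proof.
by rewrite /fv /ez /ew mulmxDr -!colE; apply/matrixP => i j; rewrite !mxE xemb_zi xemb_wi addr0.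
Qed.
Lemma qv_pv_sym a b : qv a *m pv b = qv b *m pv a.
Proof.
apply/matrixP => i j; rewrite !mxE; apply: eq_bigr => k _; by rewrite !mxE mulrC.
Qed.
Lemma pvD a b : pv (a + b) = pv a + pv b.
Proof. by apply/matrixP => i j; rewrite !mxE xembD. Qed.
Lemma qvD a b : qv (a + b) = qv a + qv b.
Proof. by apply/matrixP => i j; rewrite !mxE xembD. Qed.
Lemma pv0 : pv 0 = 0.
Proof. by apply/matrixP => i j; rewrite !mxE xemb0. Qed.
Lemma qv0 : qv 0 = 0.
Proof. by apply/matrixP => i j; rewrite !mxE xemb0. Qed.

Lemma psi_X x : psi *m Xmx x = 0.
Proof. by rewrite XmxE mulmxBr !mulmxA psi_pv psi_f !mul0mxR subrr. Qed.
Lemma X_f x : Xmx x *m fv = 0.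
Proof. by rewrite XmxE mulmxBl -!mulmxA psi_f qv_f !mulmx0R subrr. Qed.
Lemma XX a b : Xmx a *m Xmx b = - (fv *m (qv a *m pv b) *m psi).
Proof.
rewrite {1}XmxE mulmxBl -!mulmxA psi_X mulmx0R sub0r; congr (- _).
by rewrite XmxE mulmxBr !mulmxA qv_f mul0mxR subr0 !mulmxA.
Qed.
Lemma XC (a b : 'rV[R]_(n.-1)) : Xmx a *m Xmx b = Xmx b *m Xmx a.
Proof. by rewrite !XX qv_pv_sym. Qed.
Lemma X3 (a b c : 'rV[R]_(n.-1)) : Xmx a *m Xmx b *m Xmx c = 0.
Proof. by rewrite XX mulNmx -!mulmxA psi_X !mulmx0R oppr0. Qed.
Lemma XD (a b : 'rV[R]_(n.-1)) : Xmx (a + b) = Xmx a + Xmx b.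
Proof. rewrite !XmxE pvD qvD (mulmxDl (pv a) (pv b) psi) (mulmxDr fv (qv a) (qv b)).
by rewrite opprD addrACA. Qed.
Lemma X0 : Xmx (0 : 'rV[R]_(n.-1)) = 0.
Proof. by rewrite XmxE pv0 qv0 mul0mxR mulmx0R subrr. Qed.


Lemma umx_f x : umx x *m fv = fv.
Proof.
by rewrite /umx !mulmxDl mul1mx X_f -scalemxAl -mulmxA X_f mulmx0R scaler0 !addr0.
Qed.
Lemma psi_u x : psi *m umx x = psi.
Proof.
by rewrite /umx !mulmxDr mulmx1 psi_X -scalemxAr mulmxA psi_X mul0mxR scaler0 !addr0.
Qed.
Lemma umx0 : umx (0 : 'rV[R]_(n.-1)) = 1%:M.
Proof. by rewrite /umx X0 mulmx0R scaler0 !addr0. Qed.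
Lemma umxD (a b : 'rV[R]_(n.-1)) : umx a *m umx b = umx (a + b).
Proof.
rewrite /umx XD; set A := Xmx a; set B := Xmx b.
rewrite !mulmxDl !mulmxDr !mul1mx !mulmx1 -!scalemxAl -!scalemxAr.
rewrite !mulmxA /A /B !X3 mul0mxR !scaler0 !addr0 [Xmx b *m Xmx a]XC.
have E : Xmx a *m Xmx b = 2^-1 *: (Xmx a *m Xmx b) + 2^-1 *: (Xmx a *m Xmx b).
  by rewrite -scalerDl (_ : 2^-1 + 2^-1 = 1 :> R) ?scale1r //; field.
rewrite {1}E !scalerDr; exact: zmodAC.
Qed.


Notation ch := (@coshR R).
Notation sh := (@sinhR R).

Lemma scaleRE (a b : R) : a *: b = a * b. Proof. by []. Qed.

Lemma ch_sh t : ch t + sh t = expR t.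
Proof. rewrite /coshR /sinhR; field; rewrite ?pnatr_eq0 //. Qed.
Lemma ch_sh' t : ch t - sh t = expR (- t).
Proof. rewrite /coshR /sinhR; field; rewrite ?pnatr_eq0 //. Qed.
Lemma chN t : ch (- t) = ch t.
Proof. rewrite /coshR /sinhR opprK; field; rewrite ?pnatr_eq0 //. Qed.
Lemma shN t : sh (- t) = - sh t.
Proof. rewrite /coshR /sinhR opprK; field; rewrite ?pnatr_eq0 //. Qed.
Lemma chD r s : ch (r + s) = ch r * ch s + sh r * sh s.
Proof. rewrite /coshR /sinhR opprD !expRD; field; rewrite ?pnatr_eq0 //. Qed.
Lemma shD r s : sh (r + s) = sh r * ch s + ch r * sh s.
Proof. rewrite /coshR /sinhR opprD !expRD; field; rewrite ?pnatr_eq0 //. Qed.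

Lemma col_eq (A B : 'M[R]_(n.+1)) :
  (forall j, A *m delta_mx j (0 : 'I_1) = B *m delta_mx j 0) -> A = B.
Proof.
move=> H; apply/matrixP => i j; have := congr1 (fun M : 'cV[R]_(n.+1) => M i 0) (H j).
by rewrite -!colE !mxE.
Qed.

Ltac simp0 := rewrite ?eqxx ?zwF ?wzF ?andbT ?andbF /= ?mulr1 ?mulr0 ?addr0 ?add0r.


Lemma amx_ez (t : R) : amx n t *m ez = ch t *: ez + sh t *: ew.
Proof.
rewrite /ez -colE; apply/matrixP => i j; rewrite !mxE !eqxx ?zwF ?andbT ?andbF /=.
have [hz|hz] := eqVneq i (zi n); [rewrite ?hz; simp0 | 
  have [hw|hw] := eqVneq i (wi n); [rewrite ?hw; simp0|rewrite ?(negbTE hz) ?(negbTE hw) /=; simp0]]; rewrite ?ord1 /=; simp0 => //.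
Qed.

Lemma amx_ew (t : R) : amx n t *m ew = sh t *: ez + ch t *: ew.
Proof.
rewrite /ew -colE; apply/matrixP => i j; rewrite !mxE !eqxx ?wzF ?andbT ?andbF /=.
have [hz|hz] := eqVneq i (zi n); [rewrite ?hz; simp0 | 
  have [hw|hw] := eqVneq i (wi n); [rewrite ?hw; simp0|rewrite ?(negbTE hz) ?(negbTE hw) /=; simp0]]; rewrite ?ord1 /=; simp0 => //.
Qed.

Lemma amx_oth (t : R) j : j != zi n -> j != wi n -> amx n t *m delta_mx j (0 : 'I_1) = delta_mx j 0.
Proof.
move=> hjz hjw; rewrite -colE; apply/matrixP => i k; rewrite !mxE !ord1 !eqxx !andbT.
rewrite (negbTE hjz) (negbTE hjw) !andbF /=.
have [hz|hz] := eqVneq i (zi n); [rewrite ?hz; simp0 | 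
  have [hw|hw] := eqVneq i (wi n); [rewrite ?hw; simp0|rewrite ?(negbTE hz) ?(negbTE hw) /=; simp0]]; rewrite ?ord1 /=; simp0 => //.
all: by case: eqP.
Qed.


Lemma amx_f (t : R) : amx n t *m fv = expR t *: fv.
Proof.
rewrite /fv mulmxDr amx_ez amx_ew addrACA -!scalerDl scalerDr.
by congr (_ *: _ + _ *: _); rewrite !scaleRE; field; rewrite ?pnatr_eq0.
Qed.

Lemma psi_a (t : R) : psi *m amx n t = expR (- t) *: psi.
Proof.
rewrite /psi mulmxBl -!rowE; apply/matrixP => i j; rewrite !mxE !ord1 !eqxx /=.
have [hz|hz] := eqVneq j (zi n).
  by rewrite ?hz; simp0; rewrite -ch_sh'; ring.
have [hw|hw] := eqVneq j (wi n).
  by rewrite ?hw; simp0; rewrite -ch_sh'; ring.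
by rewrite !andbF /= !subr0 mulr0.
Qed.

Lemma amxD (r s : R) : amx n r *m amx n s = amx n (r + s).
Proof.
apply: col_eq => j.
have [hz|hz] := eqVneq j (zi n).
  rewrite hz -mulmxA -/ez !amx_ez mulmxDr -!scalemxAr amx_ez amx_ew.
  rewrite !scalerDr !scalerA addrACA -!scalerDl chD shD; congr (_ *: _ + _ *: _); ring.
have [hw|hw] := eqVneq j (wi n).
  rewrite hw -mulmxA -/ew !amx_ew mulmxDr -!scalemxAr amx_ez amx_ew.
  rewrite !scalerDr !scalerA addrACA -!scalerDl chD shD; congr (_ *: _ + _ *: _); ring.
by rewrite -mulmxA !amx_oth.
Qed.


Definition sd : 'rV[R]_(n.+1) := \row_i (if (val i == 0%N) || (i == zi n) then -1 else 1).
Definition jd : 'rV[R]_(n.+1) := \row_i (if i == wi n then -1 else 1).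

Lemma sigE : sigmx R n = diag_mx sd.
Proof. by apply/matrixP => i j; rewrite !mxE; case: eqP. Qed.
Lemma JE : Jmx R n = diag_mx jd.
Proof. by apply/matrixP => i j; rewrite !mxE; case: eqP. Qed.

Lemma sd_z : sd 0 (zi n) = -1. Proof. by rewrite mxE eqxx orbT. Qed.
Lemma sd_w : sd 0 (wi n) = 1.
Proof. rewrite mxE wzF orbF; case: n Hn => //. Qed.

Lemma sig_col j : sigmx R n *m delta_mx j (0 : 'I_1) = sd 0 j *: delta_mx j 0.
Proof.
rewrite sigE mul_diag_mx; apply/matrixP => i k; rewrite !mxE.
by have [->|hij] := eqVneq i j; rewrite ?mulr0 //= mulr0.
Qed.
Lemma sig_ez : sigmx R n *m ez = - ez.
Proof. by rewrite /ez sig_col sd_z scaleN1r. Qed.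
Lemma sig_ew : sigmx R n *m ew = ew.
Proof. by rewrite /ew sig_col sd_w scale1r. Qed.

Lemma sig_a (t : R) : sigmx R n *m amx n t = amx n (- t) *m sigmx R n.
Proof.
apply: col_eq => j; rewrite -!mulmxA sig_col -scalemxAr.
have [hz|hz] := eqVneq j (zi n).
  rewrite hz -/ez amx_ez amx_ez mulmxDr -!scalemxAr sig_ez sig_ew sd_z chN shN.
  by rewrite scaleN1r opprD scaleNr opprK scalerN.
have [hw|hw] := eqVneq j (wi n).
  rewrite hw -/ew amx_ew amx_ew mulmxDr -!scalemxAr sig_ez sig_ew sd_w chN shN.
  by rewrite scale1r scaleNr scalerN.
by rewrite !amx_oth // sig_col.
Qed.

Lemma psi_sig_f : psi *m sigmx R n *m fv = - (1 + 1).
Proof. by rewrite -mulmxA /fv mulmxDr sig_ez sig_ew mulmxDr mulmxN psi_ez psi_ew opprD. Qed.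

Lemma sig_tr : (sigmx R n)^T *m Jmx R n *m sigmx R n = Jmx R n.
Proof.
rewrite sigE JE tr_diag_mx !mulmx_diag; congr diag_mx; apply/matrixP => i j.
rewrite !mxE; case: ifP => _; case: ifP => _; ring.
Qed.

Lemma det_sig : \det (sigmx R n) = 1.
Proof.
rewrite sigE det_diag (bigD1 (0 : 'I_(n.+1))) //= (bigD1 (zi n)) ?zi_neq_0 //=.
rewrite big1 ?mulr1.
  by rewrite !mxE /= eqxx orbT mulrNN mulr1.
move=> i /andP [hi0 hiz]; rewrite mxE (negbTE hiz) orbF.
by case: eqP => // h; move: hi0; rewrite (_ : i = 0) ?eqxx //; apply: val_inj.
Qed.


Lemma psiE : psi = fv^T *m Jmx R n.
Proof.
rewrite JE mul_mx_diag; apply/matrixP => i j; rewrite !mxE !ord1 /=.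
have [hz|hz] := eqVneq j (zi n); first by rewrite ?hz; simp0; rewrite subr0.
have [hw|hw] := eqVneq j (wi n); first by rewrite ?hw; simp0; rewrite mul1r.
by simp0; rewrite oppr0.
Qed.

Lemma inG_psi (m : 'M[R]_(n.+1)) : inG m -> m *m fv = fv -> psi *m m = psi.
Proof.
by move=> [hG _] hf; rewrite psiE -{1}hf trmx_mul -!mulmxA (mulmxA m^T) hG.
Qed.

Lemma sh1 : sh 1 != 0.
Proof.
rewrite /sinhR mulf_eq0 invr_eq0 pnatr_eq0 orbF subr_eq0.
apply/eqP => h; have : expR (-1) < expR (1 : R) by rewrite ltr_expR; lra.
by rewrite h ltxx.
Qed.

Lemma inM_f (m : 'M[R]_(n.+1)) : inM m -> m *m fv = fv.
Proof.
move=> [[_ hw] hc]; have hw' : m *m ew = ew by [].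
have := congr1 (fun M => M *m ew) (hc 1); rewrite -!mulmxA hw' amx_ew mulmxDr.
rewrite -!scalemxAr hw' => /addIr /(scalerI sh1) hz.
by rewrite /fv mulmxDr hw' hz.
Qed.

Lemma inK1 : inK (1%:M : 'M[R]_(n.+1)).
Proof.
split; last by rewrite mul1mx.
split; first by rewrite trmx1 mul1mx mulmx1.
by split; [rewrite det1 | rewrite mxE eqxx ltr01].
Qed.

Lemma inK_sig (m : 'M[R]_(n.+1)) : inK m -> inK (sigmx R n *m m).
Proof.
move=> [[hG [hd hp]] hw]; split; last by rewrite -mulmxA hw -/ew sig_ew.
split; first by rewrite trmx_mul -!mulmxA (mulmxA (Jmx R n) (sigmx R n) m) (mulmxA (sigmx R n)^T) (mulmxA (sigmx R n)^T (Jmx R n)) sig_tr mulmxA.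
split; first by rewrite det_mulmx det_sig hd mulr1.
by rewrite sigE mul_diag_mx mxE sd_w mul1r.
Qed.


Definition UC (Cf : 'M[R]_(n.+1) -> set 'rV[R]_(n.-1)) (s : seq 'M[R]_(n.+1)) :=
  foldr (fun xi A => Cf xi `|` A) set0 s.

Lemma UC_compact Cf s : (forall xi, xi \in s -> compact (Cf xi)) -> compact (UC Cf s).
Proof.
elim: s => [|a s IH] H /=; first exact: compact0.
apply: compactU; first by apply: H; rewrite inE eqxx.
by apply: IH => xi hx; apply: H; rewrite inE hx orbT.
Qed.

Lemma UC_sub Cf s xi : xi \in s -> Cf xi `<=` UC Cf s.
Proof.
elim: s => [|a s IH] //=; rewrite inE => /orP [/eqP ->|hx] z hz; first by left.
by right; apply: IH.
Qed.


Lemma main_sec (Gam : set 'M[R]_(n.+1)) (s0 : R) (eta0 : set 'rV[R]_(n.-1))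
    (Xi : seq 'M[R]_(n.+1)) :
  subgroupG Gam -> discrete_subgroup Gam -> cusp_data Gam s0 eta0 Xi ->
  exists c : R, 0 < c /\
    forall gam xi, Gam gam -> xi \in Xi -> ~ inP (gam *m xi) ->
      forall (x : 'rV[R]_(n.-1)) (m : 'M[R]_(n.+1)) (r : R) (y : 'rV[R]_(n.-1)),
        inM m -> gam *m xi = umx x *m @sigmx R n *m m *m @amx R n r *m umx y ->
        c <= expR r.
Proof.
move=> [GamG [Gam1 [GamM GamV]]] _ [s0pos [ceta0 [one_in [XiG [hi [hii [hiii hiv]]]]]]].
have unitG g : inG g -> g \in unitmx.
  by move=> [_ [hd _]]; rewrite unitmxE hd unitr1.
have : forall xi : 'M[R]_(n.+1), exists C : set 'rV[R]_(n.-1), xi \in Xi ->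
   compact C /\ forall x, exists gam y, Gam gam /\ C y /\
          xi *m umx x *m invmx xi = gam *m (xi *m umx y *m invmx xi).
  move=> xi; case: (boolP (xi \in Xi)) => h; last by exists set0 => h'; move/negP: h.
  by have [C hC] := hii xi h; exists C.
case/choice => Cf hCf.
pose eta := eta0 `|` UC Cf Xi.
have ceta : compact eta.
  apply: compactU => //; apply: UC_compact => xi hx; by case: (hCf xi hx).
have [s1 [hs1 hs1P]] := hiv eta ceta (fun z hz => or_introl hz).
exists (expR (- (s0 + s1))); split; first exact: expR_gt0.
move=> gam xi hgam hxi _ x m r y hm hdec.
rewrite leNgt; apply/negP; rewrite ltr_expR => hr.
have [[hmG hmw] hmc] := hm.
have [_ hCxi] := hCf xi hxi.
have [gR [Y [hgR [hY hEq]]]] := hCxi (- y).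
have hxiu : xi \in unitmx by apply: (unitG); apply: (XiG).
have E1 : xi *m umx (- y) = gR *m xi *m umx Y.
  have := congr1 (mulmx^~ xi) hEq; rewrite -!mulmxA !mulVmx // !mulmx1.
  by rewrite !mulmxA.
have [_ hC1] := hCf 1%:M one_in.
have [gL [Y' [hgL [hY' hEqL]]]] := hC1 x.
rewrite !mul1mx invmx1 !mulmx1 in hEqL.
have hgLu : gL \in unitmx by apply: (unitG); apply: (GamG).
have E2 : invmx gL *m umx x = umx Y' by rewrite hEqL mulmxA mulVmx // mul1mx.
pose g2 := invmx gL *m (gam *m gR).
have hg2 : Gam g2 by apply: (GamM); [apply: (GamV) | apply: (GamM)].
have Key : g2 *m xi *m (umx Y *m amx n s1 *m 1%:M) =
           umx Y' *m amx n (- (r + s1)) *m (sigmx R n *m m).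
  rewrite /g2 mulmx1 !mulmxA.
  have -> : invmx gL *m gam *m gR *m xi *m umx Y = invmx gL *m gam *m (xi *m umx (- y)).
    by rewrite E1 !mulmxA.
  rewrite !mulmxA -(mulmxA (invmx gL) gam xi) hdec.
  rewrite -!mulmxA (mulmxA (umx y)) umxD addrN umx0 mul1mx amxD hmc.
  rewrite (mulmxA (sigmx R n)) sig_a (mulmxA (invmx gL)) E2.
  by rewrite !mulmxA.
clearbody g2.
pose p := umx Y' *m amx n (- (r + s1)) *m (sigmx R n *m m).
pose h1 := umx Y *m amx n s1 *m 1%:M.
have hO0 : Omega eta s0 p.
  exists Y', (- (r + s1)), (sigmx R n *m m); split.
    by right; exact: (UC_sub Cf Xi _ one_in _ hY').
  by split; [lra | split; [apply: inK_sig; split|]].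
have hO1 : Omega eta s1 h1.
  exists Y, s1, 1%:M; split; first by right; exact: (UC_sub Cf Xi _ hxi _ hY).
  by split; [lra | split; [exact: inK1 |]].
have hg2u : g2 \in unitmx by apply: (unitG); apply: (GamG).
have [hxi1 [x0 [m1 [hm1 hinv]]]] : 1%:M = xi /\ exists x m, inM m /\ invmx g2 = 1%:M *m umx x *m m *m invmx 1%:M.
  apply: hs1P => //; first by apply: (GamV).
  exists (xi *m h1); split; last by exists h1.
  exists p => //; rewrite mulmx1 /p -Key /h1 !mulmxA mulVmx // mul1mx.
  by rewrite -!mulmxA.
have psig2 : psi *m g2 = psi.
  have : psi *m invmx g2 = psi.
    rewrite hinv invmx1 mulmx1 mul1mx mulmxA psi_u inG_psi //; last exact: inM_f.
    by case: hm1 => [[]].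
  move=> h; by rewrite -{1}h -mulmxA mulVmx // mulmx1.
subst xi.
have := congr1 (fun M => psi *m M *m fv) Key.
rewrite ?mul1mx ?mulmx1 ?mul1mxR ?mulmx1R !mulmxA psig2 !psi_u !psi_a -!scalemxAl.
rewrite psi_f scaler0 -(mulmxA _ m) (inM_f _ hm) psi_sig_f.
move/(congr1 (fun M : 'M[R]_1 => M 0 0)); rewrite !mxE /=.
have := expR_gt0 (- - (r + s1)); lra.
Qed.

End H.

Theorem lemma3p1 (R : realType) (n : nat) (Hn : (2 <= n)%N)
    (Gam : set 'M[R]_(n.+1)) (s0 : R) (eta0 : set 'rV[R]_(n.-1))
    (Xi : seq 'M[R]_(n.+1)) :
  subgroupG Gam -> discrete_subgroup Gam -> cusp_data Gam s0 eta0 Xi ->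
  exists c : R, 0 < c /\
    forall gam xi, Gam gam -> xi \in Xi -> ~ inP (gam *m xi) ->
      forall (x : 'rV[R]_(n.-1)) (m : 'M[R]_(n.+1)) (r : R) (y : 'rV[R]_(n.-1)),
        inM m -> gam *m xi = umx x *m @sigmx R n *m m *m @amx R n r *m umx y ->
        c <= expR r.
Proof. exact: main_sec. Qed.
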